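(* In the epoch setting described in the context, assume moreover that $\mathcal{G}$ is $\Delta$-temporally connected. If $(s_1,\dots,s_\rho)\in S^{(1)}\times\cdots\times S^{(\rho)}$ is a tuple that is $I$-covering for every $I\in\mathcal{I}$, then $\mathcal{G}$ can be explored from any vertex during the $\rho$ epochs, i.e., for every vertex $v$ there is a temporal walk starting at $v$, using only time steps within the $\rho$ epochs, that visits all vertices.
   Context: A temporal walk in $\mathcal{G}=\langle G_1,\dots,G_L\rangle$ is a sequence $(v_0,e_1,v_1,\dots,e_\ell,v_\ell)$ with strictly increasing time steps $t_1<\dots<t_\ell$ such that $e_j=\{v_{j-1},v_j\}\in E(G_{t_j})$. $\mathcal{G}$ is temporally connected if every ordered pair of vertices is joined by a temporal walk, and $\Delta$-temporally connected if $\langle G_t,\dots,G_{t+\Delta-1}\rangle$ is temporally connected for every $t\in[L-\Delta+1]$. Let $n\ge 2$ and $k\ge1$, $\Delta$ be natural numbers, $\mathcal{G}$ a temporal graph on an $n$-element vertex set $V$, and $T$ a spanning tree of its underlying graph (the union of the snapshots). A snapshot is $k$-edge-deficient w.r.t. $T$ if it contains all but at most $k$ edges of $T$. Let $N=2(n-1)$, fix a DFS tour of $T$ from a root $r$ traversing each edge twice, with cyclic vertex sequence $(v_1,\dots,v_{N+1})$, $v_{N+1}=v_1=r$, tour edges $e_q=\{v_q,v_{q+1}\}$; state $q$ corresponds to vertex $v_q$. Circular intervals: $[\![i,j]\!]=\{i,\dots,j\}$ if $i\le j$, $\{i,\dots,N,1,\dots,j\}$ if $i>j$; $[\![i,j[\![=[\![i,j]\!]\setminus\{j\}$.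 Roundabout process on a sequence $H_1,\dots,H_t$ of graphs: agents $a_1,\dots,a_N$, $s_i(0)=i$; at step $\tau$, if $s_i(\tau-1)=q$ then $s_i(\tau)=(q\bmod N)+1$ if $e_q\in E(H_\tau)$, else $q$; visited states $D_i(\tau)=[\![i,s_i(\tau)]\!]$, $D_i(0)=\{i\}$; active sets $A(0)=$ all agents, and $A(\tau)$ is obtained from $A(\tau-1)$ by repeatedly removing an arbitrary agent $a_i$ with $D_i(\tau)\subseteq\bigcup D_j(\tau)$ over the other current agents, until none remains. Let $t=\lfloor N/(2k)\rfloor$ and $\rho=\lceil 18k\ln(6k)\rceil$. Assume an initial part of $[L]$ is partitioned into $\rho$ consecutive intervals (epochs), each containing at least $\Delta+t$ snapshots that are $k$-edge-deficient w.r.t. $T$; each epoch's first $\Delta$ time steps form its repositioning part, and the rest (containing at least $t$ such snapshots) is its roundabout part. In epoch $i$, run the roundabout process for $t$ steps on the first $t$ $k$-edge-deficient snapshots of its roundabout part, let $A^{(i)}$ be the active agents after step $t$ and $S^{(i)}$ their initial states. Let $\bigcup_{i\in[\rho]}S^{(i)}=\{m_1<\dots<m_d\}$, $I_j=[\![m_j,m_{j+1}[\![$ for $j\in[d-1]$, $I_d=[\![m_d,m_1[\![$, and $\mathcal{I}=\{I_1,\dots,I_d\}$. For $I\in\mathcal{I}$, a tuple $(s_1,\dots,s_\rho)\in S^{(1)}\times\cdots\times S^{(\rho)}$ is $I$-covering unless for every $i\in[\rho]$ the agent of $A^{(i)}$ with initial state $s_i$ fails to visit all states of $I$ in the roundabout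 process of epoch $i$. *)

(* Defs.v *)
From Stdlib Require Import Reals.
From mathcomp Require Import all_boot.
Set Implicit Arguments. Unset Strict Implicit. Unset Printing Implicit Defensive.

Definition Ntour (n : nat) : nat := (n.-1).*2.
Definition tsteps (n k : nat) : nat := Ntour n %/ (2 * k).
(* rho = ceil(18 k ln(6k)) : rho is the (unique) natural number with
   rho - 1 < 18 k ln(6k) <= rho *)
Definition is_rho (k rho : nat) : Prop :=
  Rlt (Rminus (INR rho) 1) (Rmult (Rmult 18 (INR k)) (ln (Rmult 6 (INR k)))) /\
  Rle (Rmult (Rmult 18 (INR k)) (ln (Rmult 6 (INR k)))) (INR rho).

Definition cint (N i j q : nat) : bool :=
  if i <= j then (i <= q) && (q <= j)
  else ((i <= q) && (q <= N)) || ((1 <= q) && (q <= j)).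
Definition cint_open (N i j q : nat) : bool := cint N i j q && (q != j).

Definition simple_snapshots {n : nat} (G : nat -> rel 'I_n) (L : nat) : Prop :=
  forall t, 1 <= t <= L -> (forall u v, G t u v = G t v u) /\ (forall u, ~~ G t u u).

(* A temporal walk from v0: the list of steps (t_j, v_j), j = 1..l, with
   strictly increasing times and {v_{j-1}, v_j} an edge of G_{t_j}. *)
Definition temporal_walk {n : nat} (G : nat -> rel 'I_n) (v0 : 'I_n)
    (w : seq (nat * 'I_n)) : Prop :=
  sorted ltn [seq p.1 | p <- w] /\
  path (fun x y : nat * 'I_n => G y.1 x.2 y.2) (0, v0) w.

Definition walk_within {n : nat} (a b : nat) (w : seq (nat * 'I_n)) : bool :=
  all (fun p => (a <= p.1) && (p.1 <= b)) w.

Definition temporally_connected_on {n : nat} (G : nat -> rel 'I_n) (a b : nat) : Prop :=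
  forall u v : 'I_n, exists w, temporal_walk G u w /\ walk_within a b w /\
                         last u [seq p.2 | p <- w] = v.

Definition delta_temporally_connected {n : nat} (G : nat -> rel 'I_n) (L Delta : nat) : Prop :=
  forall t, 1 <= t -> t + Delta - 1 <= L -> temporally_connected_on G t (t + Delta - 1).

Definition is_tree {n : nat} (T : rel 'I_n) : Prop :=
  (forall u v, T u v = T v u) /\ (forall u, ~~ T u u) /\
  (forall u v, connect T u v) /\
  #|[set e : 'I_n * 'I_n | (e.1 < e.2) && T e.1 e.2]| = n.-1.

Definition spanning_tree_of_underlying {n : nat} (G : nat -> rel 'I_n) (L : nat)
    (T : rel 'I_n) : Prop :=
  is_tree T /\ forall u v, T u v -> exists t, 1 <= t <= L /\ G t u v.

Definition deficient {n : nat} (G : nat -> rel 'I_n) (T : rel 'I_n) (k t : nat) : bool :=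
  #|[set e : 'I_n * 'I_n | [&& e.1 < e.2, T e.1 e.2 & ~~ G t e.1 e.2]]| <= k.

Definition dfs_tour {n : nat} (T : rel 'I_n) (tour : nat -> 'I_n) (r : 'I_n) : Prop :=
  let N := Ntour n in
  tour 1 = r /\ tour N.+1 = r /\
  (forall q, 1 <= q <= N -> T (tour q) (tour q.+1)) /\
  (forall u v : 'I_n, u < v -> T u v ->
     count (fun q => ((tour q == u) && (tour q.+1 == v)) ||
                     ((tour q == v) && (tour q.+1 == u))) (iota 1 N) = 2).

Fixpoint rstate {n : nat} (N : nat) (tour : nat -> 'I_n) (H : nat -> rel 'I_n)
    (i tau : nat) : nat :=
  match tau with
  | 0 => i
  | tau'.+1 =>
      let q := rstate N tour H i tau' in
      if H tau'.+1 (tour q) (tour q.+1) then q %% N + 1 else q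
  end.

Definition visited {n : nat} (N : nat) (tour : nat -> 'I_n) (H : nat -> rel 'I_n)
    (i tau q : nat) : bool :=
  cint N i (rstate N tour H i tau) q.

Definition removable (D : nat -> nat -> bool) (A : nat -> bool) (a : nat) : Prop :=
  A a /\ forall q, D a q -> exists j, [&& A j, j != a & D j q].

Fixpoint valid_removals (D : nat -> nat -> bool) (A : nat -> bool) (rs : seq nat) : Prop :=
  match rs with
  | [::] => True
  | a :: rs' => removable D A a /\ valid_removals D (fun j => A j && (j != a)) rs'
  end.

Definition prune_result (D : nat -> nat -> bool) (A A' : nat -> bool) : Prop :=
  exists rs, valid_removals D A rs /\ (forall j, A' j = A j && (j \notin rs)) /\
             forall a, ~ removable D A' a.

Definition active_run {n : nat} (N : nat) (tour : nat -> 'I_n) (H : nat -> rel 'I_n)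
    (tt : nat) (act : nat -> nat -> bool) : Prop :=
  (forall j, act 0 j = (1 <= j <= N)) /\
  forall tau, 1 <= tau <= tt ->
    prune_result (fun i q => visited N tour H i tau q) (act tau.-1) (act tau).

(* epoch i (i = 1..rho) is the interval of time steps [b (i-1) + 1, b i];
   its repositioning part is [b(i-1)+1, b(i-1)+Delta], its roundabout part the rest *)
Definition roundabout_times {n : nat} (G : nat -> rel 'I_n) (T : rel 'I_n)
    (k Delta : nat) (b : nat -> nat) (i : nat) : seq nat :=
  [seq u <- iota (b i.-1 + Delta).+1 (b i - (b i.-1 + Delta)) | deficient G T k u].

Definition epochH {n : nat} (G : nat -> rel 'I_n) (T : rel 'I_n)
    (k Delta : nat) (b : nat -> nat) (i : nat) : nat -> rel 'I_n :=
  fun tau => G (nth 0 (roundabout_times G T k Delta b i) tau.-1).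

(* sorted list m_1 < ... < m_d of the union of the S^(i) *)
Definition union_starts (N rho tt : nat) (act : nat -> nat -> nat -> bool) : seq nat :=
  [seq q <- iota 1 N | has (fun i => act i tt q) (iota 1 rho)].

Definition interval_I (N : nat) (ms : seq nat) (j : nat) : nat -> bool :=
  cint_open N (nth 0 ms j) (nth 0 ms (j.+1 %% size ms)).

(* Main.v *)
Require Import Defs.
From Stdlib Require Import Reals Lra.
From mathcomp Require Import all_boot zify.
Set Implicit Arguments. Unset Strict Implicit. Unset Printing Implicit Defensive.

Lemma rho_pos k rho : 1 <= k -> is_rho k rho -> 0 < rho.
Proof.
move=> hk [_ h2]. case: rho h2 => [|r] // h2. exfalso.
have hk' : Rle 1 (INR k) by apply: (le_INR 1); apply/leP.
have hl : Rlt 0 (ln (Rmult 6 (INR k))).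
  rewrite -ln_1; apply: ln_increasing; lra.
simpl in h2. nra.
Qed.

Definition off (N j s : nat) := if j <= s then s - j else s + N - j.

Lemma cint_step N j s q : 1 <= j <= N -> 1 <= s <= N ->
  cint N j (s %% N + 1) q -> cint N j s q \/ q = s %% N + 1.
Proof.
move=> hj hs; have [hsN|hsN] : s < N \/ s = N by lia.
  rewrite modn_small //; rewrite /cint; do 2 case: ifP; lia.
subst s; rewrite modnn /cint; do 2 case: ifP; lia.
Qed.

Lemma cint_mono N j s q : 1 <= j <= N -> 1 <= s <= N -> off N j s < N.-1 ->
  cint N j s q -> cint N j (s %% N + 1) q.
Proof.
move=> hj hs; rewrite /off; have [hsN|hsN] : s < N \/ s = N by lia.
  rewrite modn_small //; rewrite /cint; repeat case: ifP; lia.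
subst s; rewrite modnn /cint; repeat case: ifP; lia.
Qed.

Lemma off_step N j s : 1 <= j <= N -> 1 <= s <= N ->
  1 <= s %% N + 1 <= N /\ off N j (s %% N + 1) <= (off N j s).+1.
Proof.
move=> hj hs; rewrite /off; have [hsN|hsN] : s < N \/ s = N by lia.
  rewrite modn_small //; do 2 case: ifP; lia.
subst s; rewrite modnn; do 2 case: ifP; lia.
Qed.

Lemma rstate_range n N (tour : nat -> 'I_n) H j tau : 1 <= j <= N ->
  1 <= rstate N tour H j tau <= N /\ off N j (rstate N tour H j tau) <= tau.
Proof.
move=> hj; elim: tau => [|tau [IH1 IH2]] /=.
  split=> //; rewrite /off; case: ifP; lia.
case: ifP => _.
  have [h1 h2] := off_step hj IH1; split=> //; lia.
split=> //; lia.
Qed.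

Lemma removals_cover (Q : nat -> Prop) D rs : forall A,
  valid_removals D A rs ->
  (forall q, Q q -> exists j, A j /\ D j q) ->
  forall q, Q q -> exists j, (A j && (j \notin rs)) /\ D j q.
Proof.
elim: rs => [|a rs IH] A /=.
  move=> _ h q /h [j [h1 h2]]; by exists j; rewrite h1.
move=> [[hAa hrem] hv] hc.
have hc' : forall q, Q q -> exists j, (A j && (j != a)) /\ D j q.
  move=> q /hc [j [hA hD]]; case: (eqVneq j a) => [ej|nj].
    subst j; have [j' /and3P [h1 h2 h3]] := hrem q hD.
    by exists j'; rewrite h1 h2.
  by exists j; rewrite hA nj.
move=> q /(IH _ hv hc') [j [h1 h2]]; exists j; split=> //.
by rewrite in_cons negb_or andbA.
Qed.

Lemma prune_cover (Q : nat -> Prop) D A A' : prune_result D A A' ->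
  (forall q, Q q -> exists j, A j /\ D j q) ->
  forall q, Q q -> exists j, A' j /\ D j q.
Proof.
move=> [rs [hv [hA _]]] hc q hq.
have [j [h1 h2]] := removals_cover hv hc hq.
by exists j; rewrite hA.
Qed.

Lemma prune_sub D A A' : prune_result D A A' -> forall j, A' j -> A j.
Proof. by move=> [rs [_ [hA _]]] j; rewrite hA => /andP []. Qed.

Lemma act_range n N (tour : nat -> 'I_n) H tt act : active_run N tour H tt act ->
  forall tau, tau <= tt -> forall j, act tau j -> 1 <= j <= N.
Proof.
move=> [h0 hs]; elim=> [|tau IH] htau j.
  by rewrite h0.
move=> /(prune_sub (hs tau.+1 _)) h; apply: IH; first lia.
by apply: h; lia.
Qed.

Lemma act_cover n N (tour : nat -> 'I_n) H tt act : 1 <= N -> tt < N ->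
  active_run N tour H tt act ->
  forall tau, tau <= tt -> forall q, 1 <= q <= N ->
  exists j, act tau j /\ visited N tour H j tau q.
Proof.
move=> hN htt hrun; have hr := act_range hrun.
case: hrun => [h0 hs]; elim=> [|tau IH] htau q hq.
  exists q; rewrite h0 hq; split=> //; by rewrite /visited /cint /= leqnn.
have hp : 0 < tau.+1 <= tt by lia.
apply: (prune_cover (Q := fun q => 1 <= q <= N) (hs tau.+1 hp)) => //.
move=> q' hq'; have [j [hj hv]] := IH (ltnW htau) q' hq'.
exists j; split=> //.
have hjr := hr tau (ltnW htau) j hj.
have [hs1 hs2] := rstate_range tour H tau hjr.
move: hv; rewrite /visited /=; case: ifP => _ // hv.
apply: cint_mono => //; lia.
Qed.

Lemma path_head n (G : nat -> rel 'I_n) a a' v (w : seq (nat * 'I_n)) :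
  path (fun x y : nat * 'I_n => G y.1 x.2 y.2) (a, v) w =
  path (fun x y : nat * 'I_n => G y.1 x.2 y.2) (a', v) w.
Proof. by case: w. Qed.

Lemma tw_cat n (G : nat -> rel 'I_n) v w1 w2 :
  temporal_walk G v w1 -> temporal_walk G (last v [seq p.2 | p <- w1]) w2 ->
  (forall p1 p2, p1 \in w1 -> p2 \in w2 -> p1.1 < p2.1) ->
  temporal_walk G v (w1 ++ w2).
Proof.
move=> [s1 p1] [s2 p2] hlt; split.
  move: s1 s2; rewrite map_cat !(sorted_pairwise ltn_trans) => h1 h2.
  rewrite (pairwise_cat _ [seq p.1 | p <- w1]) h1 h2 andbT andbT; apply/allrelP => x y /mapP [a ha ->] /mapP [c hc ->].
  exact: hlt.
rewrite cat_path p1 /=.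
have -> : last (0, v) w1 = (( last (0,v) w1).1, last v [seq p.2 | p <- w1]).
  case: (lastP w1) => // s x; rewrite last_rcons map_rcons last_rcons; by case: x.
by rewrite (path_head _ _ 0).
Qed.

Lemma mem_walk_l (n : nat) (v u : 'I_n) (w1 w2 : seq (nat * 'I_n)) :
  u \in v :: [seq p.2 | p <- w1] -> u \in v :: [seq p.2 | p <- w1 ++ w2].
Proof. by rewrite map_cat -cat_cons mem_cat => ->. Qed.

Lemma mem_walk_r (n : nat) (v u : 'I_n) (w1 w2 : seq (nat * 'I_n)) :
  u \in last v [seq p.2 | p <- w1] :: [seq p.2 | p <- w2] ->
  u \in v :: [seq p.2 | p <- w1 ++ w2].
Proof.
rewrite in_cons => /orP [/eqP ->|h].
  by rewrite map_cat -cat_cons mem_cat mem_last.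
by rewrite map_cat -cat_cons mem_cat h orbT.
Qed.

Lemma last_walk_cat (n : nat) (v : 'I_n) (w1 w2 : seq (nat * 'I_n)) :
  last v [seq p.2 | p <- w1 ++ w2] = last (last v [seq p.2 | p <- w1]) [seq p.2 | p <- w2].
Proof. by rewrite map_cat last_cat. Qed.

Lemma within_cat (n : nat) a b (w1 w2 : seq (nat * 'I_n)) :
  walk_within a b (w1 ++ w2) = walk_within a b w1 && walk_within a b w2.
Proof. by rewrite /walk_within all_cat. Qed.

Lemma within_weaken (n : nat) a b a' b' (w : seq (nat * 'I_n)) :
  a' <= a -> b <= b' -> walk_within a b w -> walk_within a' b' w.
Proof.
move=> h1 h2; apply: sub_all => p /andP [h3 h4]; apply/andP; split; lia.
Qed.

Fixpoint aw n (G : nat -> rel 'I_n) N (tour : nat -> 'I_n) (RT : seq nat) (j tau : nat)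
  : seq (nat * 'I_n) :=
  match tau with
  | 0 => [::]
  | tau'.+1 =>
    let H := fun tau => G (nth 0 RT tau.-1) in
    let q := rstate N tour H j tau' in
    aw G N tour RT j tau' ++
      (if H tau'.+1 (tour q) (tour q.+1) then
         [:: (nth 0 RT tau', tour (rstate N tour H j tau'.+1))] else [::])
  end.

Lemma aw_spec n (G : nat -> rel 'I_n) N (tour : nat -> 'I_n) RT j tau :
  1 <= j <= N -> tour N.+1 = tour 1 -> sorted ltn RT -> tau <= size RT ->
  let H := fun tau => G (nth 0 RT tau.-1) in
  let w := aw G N tour RT j tau in
  [/\ temporal_walk G (tour j) w,
      last (tour j) [seq p.2 | p <- w] = tour (rstate N tour H j tau),
      (forall p, p \in w -> exists2 i, i < tau & p.1 = nth 0 RT i) &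
      (forall q, visited N tour H j tau q -> tour q \in tour j :: [seq p.2 | p <- w])].
Proof.
move=> hj htour hsort; elim: tau => [|tau IH] htau H w.
  split=> //; rewrite /w /=.
  move=> q; rewrite /visited /cint /= leqnn => /andP [h1 h2].
  have -> : q = j by lia.
  by rewrite mem_head.
have [IH1 IH2 IH3 IH4] := IH (ltnW htau).
rewrite /w /=; fold H.
set q := rstate N tour H j tau.
have [hq1 hq2] := rstate_range tour H tau hj.
have htq : tour (q %% N + 1) = tour q.+1.
  have [hlt|heq] : q < N \/ q = N by lia.
    by rewrite modn_small // addn1.
  by rewrite heq modnn htour.
have hH : H tau.+1 = G (nth 0 RT tau) by [].
case hE: (H tau.+1 (tour q) (tour q.+1)); have hG := hE; rewrite hH in hG;
  rewrite /= hG.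
- split.
  + apply: tw_cat => //.
      rewrite IH2; split=> //=; rewrite andbT -/q.
      by rewrite htq hG.
    move=> p1 p2 /IH3 [i hi ->]; rewrite inE => /eqP -> /=.
    apply: (sorted_ltn_nth ltn_trans 0 hsort) => //; rewrite inE; lia.
  + by rewrite last_walk_cat IH2 /= -/q.
  + move=> p; rewrite mem_cat => /orP [/IH3 [i hi ->]|]; first by exists i; lia.
    by rewrite inE => /eqP -> /=; exists tau.
  + move=> q'; rewrite /visited /= -/q hE => /cint_step [] // h.
      by apply: mem_walk_l; apply: IH4.
    apply: mem_walk_r; rewrite IH2 /= -/q h htq. by rewrite !inE eqxx orbT.
- split.
  + by rewrite cats0.
  + by rewrite cats0 IH2 /= -/q ?hE.
  + by move=> p; rewrite cats0 => /IH3 [i hi ->]; exists i; lia.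
  + by move=> q'; rewrite cats0 /visited /= -/q hE; apply: IH4.
Qed.

Lemma tour_onto n (T : rel 'I_n) tour r : 2 <= n -> is_tree T -> dfs_tour T tour r ->
  forall u : 'I_n, exists2 q, 1 <= q <= Ntour n & tour q = u.
Proof.
move=> hn [Tsym [Tirr [Tcon _]]] [h1 [h2 [_ hcnt]]] u.
have [w hw] : exists w : 'I_n, w != u.
  have h0 : 0 < n by lia. have h1' : 1 < n by lia.
  case: (eqVneq (Ordinal h0) u) => e.
    exists (Ordinal h1'); apply/eqP => e'; rewrite -e in e'; by move: e' => /(congr1 val).
  by exists (Ordinal h0).
have /connectP [p hp hl] := Tcon u w.
case: p hp hl => [|x p] /=; first by move=> _ e; rewrite e eqxx in hw.
move=> /andP [hux _] _.
have hxu : x != u by apply/eqP => e; subst x; move: (Tirr u); rewrite hux.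
set P := fun q => ((tour q == u) && (tour q.+1 == x)) || ((tour q == x) && (tour q.+1 == u)).
have : 0 < count P (iota 1 (Ntour n)).
  case: (ltngtP u x) => c.
  - rewrite (hcnt u x c hux) /P //.
  - have := hcnt x u c; rewrite -Tsym => /(_ hux).
    by rewrite /P (eq_count (a2 := fun q => ((tour q == x) && (tour q.+1 == u)) || ((tour q == u) && (tour q.+1 == x)))) // => [-> //|q]; rewrite orbC.
  - by move/val_inj: c => c; rewrite c eqxx in hxu.
rewrite -has_count => /hasP [q]; rewrite mem_iota => hq /orP [] /andP [/eqP e1 /eqP e2].
- by exists q => //; lia.
- have [hlt|heq] : q < Ntour n \/ q = Ntour n by lia.
    exists q.+1 => //; lia.
  exists 1; first by rewrite /Ntour; lia.
  by rewrite h1 -h2 -heq.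
Qed.

Lemma cover_all N rho tt (act : nat -> nat -> nat -> bool) (V : nat -> nat -> nat -> bool) s :
  1 <= N -> 0 < rho ->
  (forall i, 1 <= i <= rho -> act i tt (s i)) ->
  (forall i j, 1 <= i <= rho -> act i tt j -> 1 <= j <= N) ->
  (forall q, 1 <= q <= N -> exists j, act 1 tt j /\ V 1 j q) ->
  (let ms := union_starts N rho tt act in forall j, j < size ms ->
     exists i, 1 <= i <= rho /\ forall q, interval_I N ms j q -> V i (s i) q) ->
  forall q, 1 <= q <= N -> exists i, 1 <= i <= rho /\ V i (s i) q.
Proof.
move=> hN hrho hs hr hinv hcov q hq.
set ms := union_starts N rho tt act in hcov.
have memms : forall i j, 1 <= i <= rho -> act i tt j -> j \in ms.
  move=> i j hi ha; rewrite mem_filter mem_iota.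
  have := hr i j hi ha => hj.
  apply/andP; split; last lia.
  by apply/hasP; exists i => //; rewrite mem_iota; lia.
have hrng : forall x, x \in ms -> 1 <= x <= N.
  by move=> x; rewrite mem_filter mem_iota => /andP [_]; lia.
have hsort : sorted ltn ms by apply: sorted_filter; [exact: ltn_trans|exact: iota_ltn_sorted].
have h1 : 1 <= 1 <= rho by lia.
have hs1 := memms _ _ h1 (hs 1 h1).
case: (leqP (size ms) 1) => hsz.
  have [j [hj hv]] := hinv q hq.
  have hj1 := memms _ _ h1 hj.
  exists 1; split=> //.
  have : j = s 1.
    move: hs1 hj1 hsz; case: (ms) => [|a [|b l]] //=.
    by rewrite !inE => /eqP -> /eqP ->.
  by move=> <-.
set d := size ms.
have nth_in : forall i, i < d -> 1 <= nth 0 ms i <= N.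
  by move=> i hi; apply: hrng; apply: mem_nth.
have hlast : nth 0 ms 0 < nth 0 ms d.-1.
  apply: (sorted_ltn_nth ltn_trans 0 hsort); rewrite ?inE /d; lia.
set c := find (fun x => q < x) ms.
have hc : c <= d by apply: find_size.
have bef : forall i, i < c -> nth 0 ms i <= q.
  by move=> i hi; have := before_find 0 hi => /negbT; rewrite -leqNgt.
have aft : c < d -> q < nth 0 ms c.
  by move=> h; apply: (@nth_find _ 0 (fun x => q < x)); rewrite has_find.
have [hc0|hcpos] := posnP c.
  have := hcov d.-1 ltac:(lia) => [[i [hi hv]]].
  exists i; split=> //; apply: hv.
  rewrite /interval_I prednK; last lia.
  rewrite modnn /cint_open /cint.
  have := aft ltac:(lia); rewrite hc0 => ha.
  rewrite leqNgt hlast /=; apply/andP; split; [lia|].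
  by rewrite neq_ltn ha.
have [hcd|hcd] : c < d \/ c = d by lia.
  have := hcov c.-1 ltac:(lia) => [[i [hi hv]]].
  exists i; split=> //; apply: hv.
  rewrite /interval_I prednK // modn_small // /cint_open /cint.
  have ha := aft hcd; have hb := bef c.-1 ltac:(lia).
  have hcmp : nth 0 ms c.-1 <= nth 0 ms c by lia.
  by rewrite hcmp hb /= (ltnW ha) neq_ltn ha.
have := hcov d.-1 ltac:(lia) => [[i [hi hv]]].
exists i; split=> //; apply: hv.
rewrite /interval_I prednK; last lia.
rewrite modnn /cint_open /cint.
have hb := bef d.-1 ltac:(lia).
rewrite leqNgt hlast /= hb /=.
apply/andP; split; first lia.
rewrite neq_ltn; apply/orP; right; lia.
Qed.

Theorem lemma13
  (n : nat) (G : nat -> rel 'I_n) (L k Delta rho : nat)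
  (T : rel 'I_n) (tour : nat -> 'I_n) (r : 'I_n)
  (b : nat -> nat) (act : nat -> nat -> nat -> bool) (s : nat -> nat) :
  2 <= n -> 1 <= k -> 1 <= Delta ->
  simple_snapshots G L ->
  spanning_tree_of_underlying G L T ->
  dfs_tour T tour r ->
  is_rho k rho ->
  (* epochs: [b(i-1)+1, b i], i = 1..rho, an initial part of [L] *)
  b 0 = 0 ->
  (forall i, 1 <= i <= rho -> b i.-1 <= b i) ->
  b rho <= L ->
  (forall i, 1 <= i <= rho ->
     Delta + tsteps n k <= count (deficient G T k) (iota (b i.-1).+1 (b i - b i.-1))) ->
  (* act i = the active sets A(0),...,A(t) of a run of the roundabout process of epoch i *)
  (forall i, 1 <= i <= rho ->
     active_run (Ntour n) tour (epochH G T k Delta b i) (tsteps n k) (act i)) ->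
  delta_temporally_connected G L Delta ->
  (* (s_1,...,s_rho) in S^(1) x ... x S^(rho) *)
  (forall i, 1 <= i <= rho -> act i (tsteps n k) (s i)) ->
  (* the tuple is I-covering for every I in the family of intervals *)
  (let ms := union_starts (Ntour n) rho (tsteps n k) act in
   forall j, j < size ms ->
     exists i, 1 <= i <= rho /\
       forall q, interval_I (Ntour n) ms j q ->
         visited (Ntour n) tour (epochH G T k Delta b i) (s i) (tsteps n k) q) ->
  forall v : 'I_n, exists w : seq (nat * 'I_n),
    temporal_walk G v w /\ walk_within 1 (b rho) w /\
    forall u : 'I_n, u \in v :: [seq p.2 | p <- w].
Proof.
move=> hn hk hD _ [htree _] hdfs hrhoR hb0 hbm hbL hcnt hrun hdtc hs hcov v.
set N := Ntour n in hrun hs hcov *.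
set t := tsteps n k in hcnt hrun hs hcov *.
have hN : 2 <= N by rewrite /N /Ntour; lia.
have ht : t < N by apply: ltn_Pdiv; lia.
have hrho := rho_pos hk hrhoR.
have htour : tour N.+1 = tour 1 by case: hdfs => [h1 [h2 _]]; rewrite h1 h2.
have hble : forall j, j <= rho -> b j <= b rho.
  move=> j hj; have : j + (rho - j) = rho by lia.
  move: (rho - j) => d; clear hj; elim: d j => [|d IH] j; first by rewrite addn0 => ->.
  move=> e; apply: leq_trans (IH j.+1 ltac:(lia)).
  by have := hbm j.+1 ltac:(lia).
have hr : forall i j, 1 <= i <= rho -> act i t j -> 1 <= j <= N.
  by move=> i j hi; apply: (act_range (hrun i hi)).
have main : forall m, m <= rho -> exists w : seq (nat * 'I_n),
    temporal_walk G v w /\ walk_within 1 (b m) w /\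
    forall i, 1 <= i <= m -> forall q,
      visited N tour (epochH G T k Delta b i) (s i) t q -> tour q \in v :: [seq p.2 | p <- w].
  elim=> [|m IH] hm.
    exists [::]; split; first by split.
    by split=> // i; lia.
  have [w [hw1 [hw2 hw3]]] := IH (ltnW hm).
  have him : 1 <= m.+1 <= rho by lia.
  have hc := hcnt m.+1 him; rewrite /= in hc.
  have hlen : b m + Delta + t <= b m.+1.
    have := count_size (deficient G T k) (iota (b m).+1 (b m.+1 - b m)).
    rewrite size_iota; lia.
  have hbmL : b m.+1 <= L by apply: leq_trans (hble _ hm) hbL.
  have [h [hh1 [hh2 hh3]]] := hdtc (b m).+1 ltac:(lia) ltac:(lia) (last v [seq p.2 | p <- w]) (tour (s m.+1)).
  set RT := roundabout_times G T k Delta b m.+1.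
  have hRTs : sorted ltn RT.
    by apply: sorted_filter; [exact: ltn_trans|exact: iota_ltn_sorted].
  have hRTm : forall x, x \in RT -> b m + Delta < x <= b m.+1.
    by move=> x; rewrite mem_filter mem_iota /= => /andP [_]; lia.
  have hRTsz : t <= size RT.
    rewrite size_filter /=.
    have e : b m.+1 - b m = Delta + (b m.+1 - (b m + Delta)) by lia.
    move: hc; rewrite e iotaD count_cat.
    have := count_size (deficient G T k) (iota (b m).+1 Delta); rewrite size_iota.
    rewrite addSn => h1 h2.
    have h3 : t <= count (deficient G T k) (iota (b m + Delta).+1 (b m.+1 - (b m + Delta))) by lia.
    exact: h3.
  have hsr := hr _ _ him (hs _ him).
  have [ha1 ha2 ha3 ha4] := @aw_spec n G N tour RT (s m.+1) t hsr htour hRTs hRTsz.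
  set a := aw G N tour RT (s m.+1) t in ha1 ha2 ha3 ha4.
  have hat : forall p, p \in a -> b m + Delta < p.1 <= b m.+1.
    move=> p /ha3 [i hi ->]; apply: hRTm; apply: mem_nth; exact: leq_trans hi hRTsz.
  have hht : forall p, p \in h -> (b m).+1 <= p.1 <= (b m).+1 + Delta - 1.
    by move=> p hp; move/allP: hh2 => /(_ p hp).
  have hwt : forall p, p \in w -> 1 <= p.1 <= b m.
    by move=> p hp; move/allP: hw2 => /(_ p hp).
  exists (w ++ (h ++ a)); split; last split.
  - apply: tw_cat => //.
      apply: tw_cat => //; first by rewrite hh3.
      move=> [x1 y1] [x2 y2] /hht /= h1 /hat /= h2; lia.
    move=> [x1 y1] [x2 y2] /hwt /= h1; rewrite mem_cat => /orP [/hht|/hat] /= h2; lia.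
  - rewrite !within_cat; apply/and3P; split.
    + by apply: (within_weaken (a := 1) (b := b m)) => //; lia.
    + apply/allP => -[x y] /hht /= h1; apply/andP; split; lia.
    + apply/allP => -[x y] /hat /= h1; apply/andP; split; lia.
  - move=> i hi q hq.
    have [hi'|hi'] : i <= m \/ i = m.+1 by lia.
      by apply: mem_walk_l; apply: (hw3 i) => //; lia.
    subst i; apply: mem_walk_r; apply: mem_walk_r.
    by rewrite hh3; apply: ha4.
have [w [hw1 [hw2 hw3]]] := main rho (leqnn _).
exists w; split=> //; split=> // u.
have [q hq <-] := tour_onto hn htree hdfs u.
have h1 : 1 <= 1 <= rho by lia.
have hinv := act_cover (ltnW hN) ht (hrun 1 h1) (leqnn t).
have [i [hi hv]] := cover_all (V := fun i j q => visited N tour (epochH G T k Delta b i) j t q)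
  (ltnW hN) hrho hs hr hinv hcov hq.
exact: hw3 hi q hv.
Qed.
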